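(* Let $h_1\subsetneq h_2^*$ be strongly separated half-spaces, let $\xi_1\in h_1$ and $\xi_2\in h_2$ be points of $\overline X$, and let $p\in B(h_1,h_2)$. Then $m(\xi_1,p,\xi_2)=p$.
   Context: $X$ is a finite-dimensional CAT(0) cube complex identified with its vertex set, $\mathfrak H$ its set of half-spaces, $h^*=X\setminus h$, $U_v=\{h:v\in h\}$; the Roller compactification $\overline X$ is the closure of $\{U_v\}$ in $2^{\mathfrak H}$, each $\xi\in\overline X$ a subset $U_\xi$, and a half-space $h$ is regarded as $\{\xi\in\overline X:h\in U_\xi\}$. The median $m(u,v,w)$ of $u,v,w\in\overline X$ is the point with $U_m=(U_u\cap U_v)\cup(U_v\cap U_w)\cup(U_w\cap U_u)$. Transverse ($\pitchfork$): all four intersections $h\cap k,h\cap k^*,h^*\cap k,h^*\cap k^*$ nonempty; strongly separated: no half-space transverse to both. Write $\hat a\subset b$ if $a\subsetneq b$ or $a^*\subsetneq b$. $\beta(h_1,h_2)$ is the set of $h$ with ($\hat h_1\subset h$, $h\pitchfork h_2$) or ($\hat h_2\subset h$, $h\pitchfork h_1$) or ($\hat h_1\subset h$, $\hat h_2\subset h$); $B(h_1,h_2)=\{x\in X:x\in h\ \forall h\in\beta(h_1,h_2)\}$. *)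

(* Defs.v *)
(* A finite-dimensional CAT(0) cube complex is modelled through
   its 1-skeleton, i.e. a median graph (Chepoi / Roller / Gerasimov), with the
   vertex set V identified with X. *)
From Stdlib Require Import List Arith.
Import ListNotations.

Set Implicit Arguments.

Section Defs.
Variable V : Type.
Variable adj : V -> V -> Prop.

Inductive walk : V -> V -> nat -> Prop :=
| walk0 x : walk x x 0
| walkS x y z n : adj x y -> walk y z n -> walk x z (S n).

Definition dist (x y : V) (n : nat) : Prop :=
  walk x y n /\ forall m, walk x y m -> n <= m.

Definition simple_graph : Prop :=
  (forall x y, adj x y -> adj y x) /\ (forall x, ~ adj x x).

Definition connected : Prop := forall x y, exists n, walk x y n.

Definition in_interval (x y z : V) : Prop :=
  exists a b, dist x z a /\ dist z y b /\ dist x y (a + b).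

Definition median_graph : Prop :=
  simple_graph /\ connected /\
  forall x y z, exists! m, in_interval x y m /\ in_interval y z m /\ in_interval x z m.

Definition convex (A : V -> Prop) : Prop :=
  forall x y z, A x -> A y -> in_interval x y z -> A z.

Definition hstar (h : V -> Prop) : V -> Prop := fun x => ~ h x.

Definition halfspace (h : V -> Prop) : Prop :=
  (exists x, h x) /\ (exists x, ~ h x) /\ convex h /\ convex (hstar h).

Definition meets (A B : V -> Prop) : Prop := exists x, A x /\ B x.

Definition transverse (h k : V -> Prop) : Prop :=
  meets h k /\ meets h (hstar k) /\ meets (hstar h) k /\ meets (hstar h) (hstar k).

Definition strongly_separated (h1 h2 : V -> Prop) : Prop :=
  ~ exists k, halfspace k /\ transverse k h1 /\ transverse k h2.

Definition subset (A B : V -> Prop) : Prop := forall x, A x -> B x.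
Definition psubset (A B : V -> Prop) : Prop := subset A B /\ exists x, B x /\ ~ A x.

Definition hat_sub (a b : V -> Prop) : Prop := psubset a b \/ psubset (hstar a) b.

Definition beta (h1 h2 h : V -> Prop) : Prop :=
  halfspace h /\
  ((hat_sub h1 h /\ transverse h h2) \/
   (hat_sub h2 h /\ transverse h h1) \/
   (hat_sub h1 h /\ hat_sub h2 h)).

Definition Bset (h1 h2 : V -> Prop) (x : V) : Prop :=
  forall h, beta h1 h2 h -> h x.

Definition finite_dim : Prop :=
  exists D, forall l : list (V -> Prop),
    (forall h, In h l -> halfspace h) ->
    (forall i j, i < j -> j < length l ->
        transverse (nth i l (fun _ => False)) (nth j l (fun _ => False))) ->
    length l <= D.

Definition Uv (v : V) (h : V -> Prop) : Prop := halfspace h /\ h v.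

(* points of the Roller compactification: subsets U of the set of half-spaces
   lying in the closure of {U_v} in the product topology of 2^H *)
Definition roller_point (U : (V -> Prop) -> Prop) : Prop :=
  (forall h, U h -> halfspace h) /\
  forall F : list (V -> Prop), (forall h, In h F -> halfspace h) ->
    exists v, forall h, In h F -> (U h <-> h v).

Definition median3 (U1 U2 U3 : (V -> Prop) -> Prop) (h : V -> Prop) : Prop :=
  (U1 h /\ U2 h) \/ (U2 h /\ U3 h) \/ (U3 h /\ U1 h).

End Defs.

(* Main.v *)
Require Import Defs.
From Stdlib Require Import List Arith Classical.
Import ListNotations.

Section Aux.
Variable V : Type.

Lemma hat_aux (k a b : V -> Prop) :
  (forall x, a x -> b x -> False) -> meets k a -> meets k b ->
  ~ transverse k a -> hat_sub a k.
Proof.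
  intros D Ma Mb NT. unfold transverse in NT.
  destruct (classic (meets k (hstar a))) as [M1|M1].
  - destruct (classic (meets (hstar k) a)) as [M2|M2].
    + destruct (classic (meets (hstar k) (hstar a))) as [M3|M3].
      * exfalso; tauto.
      * right. split.
        -- intros x nax. apply NNPP. intro nkx. apply M3. exists x; split; auto.
        -- destruct Ma as [x [kx ax]]. exists x. split; auto.
    + left. split.
      * intros x ax. apply NNPP. intro nkx. apply M2. exists x; split; auto.
      * destruct Mb as [x [kx bx]]. exists x. split; auto. intro ax; exact (D x ax bx).
  - exfalso. apply M1. destruct Mb as [x [kx bx]]. exists x. split; auto.
    intro ax. exact (D x ax bx).
Qed.
End Aux.

Lemma key (V : Type) (adj : V -> V -> Prop) (h1 h2 k : V -> Prop)
  (Hsub : psubset h1 (hstar h2)) (Hss : strongly_separated adj h1 h2) :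
  halfspace adj k -> meets k h1 -> meets k h2 -> beta adj h1 h2 k.
Proof.
  intros Hk M1 M2. split; [exact Hk|].
  assert (D : forall x, h1 x -> h2 x -> False).
  { intros x a b. destruct Hsub as [S _]. exact (S x a b). }
  assert (D' : forall x, h2 x -> h1 x -> False) by (intros x a b; exact (D x b a)).
  destruct (classic (transverse k h1)) as [T1|T1];
  destruct (classic (transverse k h2)) as [T2|T2].
  - exfalso. apply Hss. exists k. auto.
  - right; left. split; [|exact T1]. apply (@hat_aux _ _ _ _ D' M2 M1 T2).
  - left. split; [|exact T2]. apply (@hat_aux _ _ _ _ D M1 M2 T1).
  - right; right. split; [apply (@hat_aux _ _ _ _ D M1 M2 T1) | apply (@hat_aux _ _ _ _ D' M2 M1 T2)].
Qed.

Theorem lemma3 (V : Type) (adj : V -> V -> Prop)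
  (HX : median_graph adj) (Hfd : finite_dim adj)
  (h1 h2 : V -> Prop) (Hh1 : halfspace adj h1) (Hh2 : halfspace adj h2)
  (Hsub : psubset h1 (hstar h2)) (Hss : strongly_separated adj h1 h2)
  (U1 U2 : (V -> Prop) -> Prop)
  (HU1 : roller_point adj U1) (HU2 : roller_point adj U2)
  (Hxi1 : U1 h1) (Hxi2 : U2 h2)
  (p : V) (Hp : Bset adj h1 h2 p) :
  forall h, median3 U1 (Uv adj p) U2 h <-> Uv adj p h.
Proof.
  intros h. unfold median3. split.
  - intros [[_ H]|[[H _]|[HU2h HU1h]]]; try exact H.
    assert (Hh : halfspace adj h) by (apply (proj1 HU1); exact HU1h).
    split; [exact Hh|]. apply Hp. apply key; auto.
    + destruct (proj2 HU1 [h1; h]) as [v Hv].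
      { intros g [<-|[<-|[]]]; auto. }
      exists v. split; [apply (Hv h); simpl; auto | apply (Hv h1); simpl; auto].
    + destruct (proj2 HU2 [h2; h]) as [v Hv].
      { intros g [<-|[<-|[]]]; auto. }
      exists v. split; [apply (Hv h); simpl; auto | apply (Hv h2); simpl; auto].
  - intros Hu. destruct Hu as [Hh hp].
    destruct (classic (U1 h)) as [A|A]; [left; split; [exact A|split; auto]|].
    destruct (classic (U2 h)) as [B|B]; [right; left; split; [split; auto|exact B]|].
    exfalso.
    assert (Hhs : halfspace adj (hstar h)).
    { destruct Hh as [[x hx] [[y hy] [C1 C2]]].
      split; [exists y; exact hy|]. split; [exists x; intro H; exact (H hx)|].
      split; [exact C2|].
      intros x0 y0 z0 a b c. unfold hstar in *. intro nz. apply nz.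
      apply (C1 x0 y0 z0); [apply NNPP; exact a | apply NNPP; exact b | exact c]. }
    assert (Hb : beta adj h1 h2 (hstar h)).
    { apply key; auto.
      + destruct (proj2 HU1 [h1; h]) as [v Hv].
        { intros g [<-|[<-|[]]]; auto. }
        exists v. split.
        * intro hv. apply A. apply (Hv h); simpl; auto.
        * apply (Hv h1); simpl; auto.
      + destruct (proj2 HU2 [h2; h]) as [v Hv].
        { intros g [<-|[<-|[]]]; auto. }
        exists v. split.
        * intro hv. apply B. apply (Hv h); simpl; auto.
        * apply (Hv h2); simpl; auto. }
    exact (Hp _ Hb hp).
Qed.
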